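(* DBS is complete and optimal: on every MAPF-DL instance, and for every choice of tie-breaking and of the groups selected for merging or splitting, DBS terminates and returns a solution whose number of unsuccessful agents is the minimum over all solutions of the instance.
   Context: MAPF-DL. An instance consists of a deadline $T_{\mathrm{end}}\in\mathbb{N}$, a finite undirected graph $G=(V,E)$, and $M$ agents $a_1,\dots,a_M$; agent $a_i$ has a start vertex $s_i$ and a goal vertex $g_i$, and the graph distance from $s_i$ to $g_i$ is at most $T_{\mathrm{end}}$. A path for $a_i$ is a map $l_i:\{0,\dots,T_{\mathrm{end}}\}\to V$ with $l_i(0)=s_i$, $l_i(T_{\mathrm{end}})=g_i$, and for each $t\ge1$ either $(l_i(t-1),l_i(t))\in E$ or $l_i(t-1)=l_i(t)$. A plan assigns a path to each agent of some subset (the successful agents); the others are unsuccessful and get no path. Two distinct successful agents collide if they occupy the same vertex at the same time step, or traverse the same edge in opposite directions between time steps $t$ and $t+1$. A solution is a plan with no collisions; its cost is the number of unsuccessful agents. A set (group) $\gamma$ of agents is consistent if there is a solution in which every agent of $\gamma$ is successful and all other agents are unsuccessful (the empty group is consistent). DBS assumes an exact oracle deciding consistency and, for consistent $\gamma$, producing such a solution. Algorithm DBS (Death-Based Search). Best-first search over a death tree (DT); each DT node $N$ has a collection $N.\mathrm{live}$ of pairwise disjoint groups of agents and a cost $N.\mathrm{cost}$ (number of agents declared unsuccessful). The root has $\mathrm{live}=\{\{a_1\},\dots,\{a_M\}\}$ and cost $0$; OPEN initially contains the root. Repeat: remove from OPEN a node $N$ of minimum cost (ties arbitrary). If all groups of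 $N.\mathrm{live}$ are consistent: if $N.\mathrm{live}$ consists of a single group $\gamma$, return a solution in which exactly the agents of $\gamma$ are successful; otherwise create one child $N'$ with $N'.\mathrm{live}=(N.\mathrm{live}\setminus\{\gamma_1,\gamma_2\})\cup\{\gamma_1\cup\gamma_2\}$, where $\gamma_1\neq\gamma_2$ are two groups of smallest size in $N.\mathrm{live}$ (ties arbitrary), and $N'.\mathrm{cost}=N.\mathrm{cost}$, and insert it into OPEN. Otherwise, let $\gamma$ be an inconsistent group of $N.\mathrm{live}$; for each agent $a_i\in\gamma$ create a child $N'$ with $N'.\mathrm{live}=(N.\mathrm{live}\setminus\{\gamma\})\cup\{\gamma\setminus\{a_i\}\}$ and $N'.\mathrm{cost}=N.\mathrm{cost}+1$, and insert it into OPEN. *)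

(* Defs.v *)
From Stdlib Require Import Relations.
From mathcomp Require Import all_boot.
Set Implicit Arguments. Unset Strict Implicit. Unset Printing Implicit Defensive.

Definition dist_le (V : finType) (E : rel V) (u v : V) (k : nat) : Prop :=
  exists p : seq V, [/\ size p <= k, path E u p & last u p = v].

Section MAPFDL.
Variables (Tend : nat) (V : finType) (E : rel V) (M : nat)
          (s g : 'I_M -> V).

Definition agent := 'I_M.

(* a path l : {0..Tend} -> V (values beyond Tend are irrelevant) *)
Definition valid_path (i : agent) (l : nat -> V) : Prop :=
  [/\ l 0 = s i, l Tend = g i &
      forall t, 0 < t <= Tend -> E (l t.-1) (l t) \/ l t.-1 = l t].

(* a plan: successful agents get Some path, unsuccessful ones None *)
Definition plan := agent -> option (nat -> V).

Definition collide (l1 l2 : nat -> V) : Prop :=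
  (exists t, t <= Tend /\ l1 t = l2 t) \/
  (exists t, t < Tend /\ l1 t = l2 t.+1 /\ l1 t.+1 = l2 t).

Definition is_plan (p : plan) : Prop :=
  forall i l, p i = Some l -> valid_path i l.

Definition is_solution (p : plan) : Prop :=
  is_plan p /\
  forall i j l1 l2, i <> j -> p i = Some l1 -> p j = Some l2 -> ~ collide l1 l2.

Definition cost (p : plan) : nat := #|[pred i : agent | ~~ isSome (p i)]|.

Definition optimal_solution (p : plan) : Prop :=
  is_solution p /\ forall q, is_solution q -> cost p <= cost q.

Definition succ_exactly (p : plan) (gam : {set agent}) : Prop :=
  forall i, isSome (p i) = (i \in gam).

Definition consistent (gam : {set agent}) : Prop :=
  exists p, is_solution p /\ succ_exactly p gam.

(* DT node: (live groups, cost) *)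
Definition node := ({set {set agent}} * nat)%type.

Inductive dbs_state :=
| Open of seq node      (* OPEN list, viewed as a multiset *)
| Done of plan.

Definition min_in (N : node) (OPEN : seq node) : Prop :=
  forall N', N' \in OPEN -> N.2 <= N'.2.

Definition all_consistent (live : {set {set agent}}) : Prop :=
  forall gam, gam \in live -> consistent gam.

Inductive dbs_step : dbs_state -> dbs_state -> Prop :=
| dbs_return OPEN rest (N : node) gam p :
    perm_eq OPEN (N :: rest) -> min_in N OPEN ->
    all_consistent N.1 -> N.1 = [set gam] ->
    is_solution p -> succ_exactly p gam ->
    dbs_step (Open OPEN) (Done p)
| dbs_merge OPEN rest (N : node) g1 g2 :
    perm_eq OPEN (N :: rest) -> min_in N OPEN ->
    all_consistent N.1 ->
    g1 \in N.1 -> g2 \in N.1 -> g1 != g2 ->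
    (forall gam, gam \in N.1 -> #|g1| <= #|gam|) ->
    (forall gam, gam \in N.1 -> gam != g1 -> #|g2| <= #|gam|) ->
    dbs_step (Open OPEN)
      (Open ((((N.1 :\ g1) :\ g2) :|: [set g1 :|: g2], N.2) :: rest))
| dbs_split OPEN rest (N : node) gam :
    perm_eq OPEN (N :: rest) -> min_in N OPEN ->
    gam \in N.1 -> ~ consistent gam ->
    dbs_step (Open OPEN)
      (Open ([seq ((N.1 :\ gam) :|: [set gam :\ a], N.2.+1) | a <- enum gam]
             ++ rest)).

Definition dbs_init : dbs_state :=
  Open [:: ([set [set i] | i : agent], 0)].

End MAPFDL.

(* Main.v *)
Require Import Defs.
From Stdlib Require Import Relations Classical.
From mathcomp Require Import all_boot zify.
Set Implicit Arguments. Unset Strict Implicit. Unset Printing Implicit Defensive.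

Section Aux.
Variable T : finType.

Definition disj (P : {set {set T}}) :=
  forall A B x, A \in P -> B \in P -> A != B -> x \in A -> x \in B -> False.

Lemma coverE (P : {set {set T}}) x : (x \in cover P) <-> exists2 B, B \in P & x \in B.
Proof. by rewrite /cover; split => [/bigcupP|[B HB Hx]]; last apply/bigcupP; eauto. Qed.

Lemma cover_split (P : {set {set T}}) gam a : disj P -> gam \in P -> a \in gam ->
  cover ((P :\ gam) :|: [set gam :\ a]) = cover P :\ a.
Proof.
move=> HD Hg Ha; apply/setP => x; apply/idP/idP.
- move/coverE => [B]; rewrite !inE => /orP[/andP[HBg HB]|/eqP ->] Hx.
  + apply/andP; split; last by apply/coverE; exists B.
    apply/negP => /eqP Hxa; subst x; exact: (HD _ _ a HB Hg HBg Hx Ha).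
  + by move: Hx; rewrite !inE => /andP[-> Hx]; apply/coverE; exists gam.
- rewrite in_setD1 => /andP[Hxa /coverE [B HB Hx]]; apply/coverE.
  case: (eqVneq B gam) => [HBg|HBg].
  + subst B; exists (gam :\ a); first by rewrite !inE eqxx orbT.
    by rewrite in_setD1 Hxa.
  + by exists B => //; rewrite !inE HBg HB.
Qed.

Lemma disj_split (P : {set {set T}}) gam a : disj P -> gam \in P ->
  disj ((P :\ gam) :|: [set gam :\ a]).
Proof.
move=> HD Hg A B x; rewrite !inE => /orP[/andP[HAg HA]|/eqP HA] /orP[/andP[HBg HB]|/eqP HB] HAB.
- exact: HD HA HB HAB.
- subst B; rewrite in_setD1 => Hx /andP[_ Hx']; exact: HD HA Hg HAg Hx Hx'.
- subst A; rewrite in_setD1 => /andP[_ Hx] Hx'; by apply: (HD _ _ x Hg HB) => //; rewrite eq_sym.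
- by subst; rewrite eqxx in HAB.
Qed.

Lemma cover_merge (P : {set {set T}}) g1 g2 : g1 \in P -> g2 \in P ->
  cover (((P :\ g1) :\ g2) :|: [set g1 :|: g2]) = cover P.
Proof.
move=> H1 H2; apply/setP => x; apply/idP/idP.
- move/coverE => [B]; rewrite !inE => /orP[/andP[_ /andP[_ HB]]|/eqP ->] Hx.
  + by apply/coverE; exists B.
  + by move: Hx; rewrite inE => /orP[Hx|Hx]; apply/coverE; [exists g1|exists g2].
- move/coverE => [B HB Hx]; apply/coverE.
  case: (eqVneq B g1) => [HB1|HB1]; first by exists (g1 :|: g2); [rewrite !inE eqxx orbT|rewrite inE -HB1 Hx].
  case: (eqVneq B g2) => [HB2|HB2]; first by exists (g1 :|: g2); [rewrite !inE eqxx orbT|rewrite inE -HB2 Hx orbT].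
  by exists B => //; rewrite !inE HB1 HB2 HB.
Qed.

Lemma disj_merge (P : {set {set T}}) g1 g2 : disj P -> g1 \in P -> g2 \in P ->
  disj (((P :\ g1) :\ g2) :|: [set g1 :|: g2]).
Proof.
move=> HD H1 H2 A B x; rewrite !inE.
move=> /orP[/andP[HA2 /andP[HA1 HA]]|/eqP HA] /orP[/andP[HB2 /andP[HB1 HB]]|/eqP HB] HAB.
- exact: HD HA HB HAB.
- subst B => Hx; rewrite inE => /orP[Hx'|Hx'].
  + exact: HD HA H1 HA1 Hx Hx'.
  + exact: HD HA H2 HA2 Hx Hx'.
- subst A; rewrite inE => /orP[Hx|Hx] Hx'.
  + by apply: (HD _ _ x H1 HB) => //; rewrite eq_sym.
  + by apply: (HD _ _ x H2 HB) => //; rewrite eq_sym.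
- by subst; rewrite eqxx in HAB.
Qed.

End Aux.


Lemma seq_min (T : eqType) (h : T -> nat) (l : seq T) : l != [::] ->
  exists2 x, x \in l & forall y, y \in l -> h x <= h y.
Proof.
elim: l => [//|a l IH] _.
case: (eqVneq l [::]) => [->|Hl].
  by exists a; rewrite ?mem_head // => y; rewrite inE => /eqP ->.
have [x Hx Hm] := IH Hl.
case: (leqP (h a) (h x)) => Hax.
- exists a; first exact: mem_head.
  move=> y; rewrite inE => /orP[/eqP ->//|Hy]; exact: leq_trans Hax (Hm _ Hy).
- exists x; first by rewrite inE Hx orbT.
  move=> y; rewrite inE => /orP[/eqP ->|Hy]; [exact: ltnW|exact: Hm].
Qed.

Lemma sum_le_const (T : eqType) (r : seq T) (h : T -> nat) c :
  (forall x, x \in r -> h x <= c) -> \sum_(x <- r) h x <= size r * c.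
Proof.
elim: r => [|a r IH] H; first by rewrite big_nil.
rewrite big_cons /= mulSn leq_add ?H ?mem_head //.
by apply: IH => x Hx; apply: H; rewrite inE Hx orbT.
Qed.

Lemma arith1 cq sq cp gm cv n2 n2' M :
  cq + sq = M -> cp + gm = M -> sq <= cv -> n2 <= n2' -> n2 + gm = M -> n2' + cv = M -> cp <= cq.
Proof. lia. Qed.

Lemma arith2 a x M : 0 < x -> a <= M -> a * x < M.+1 * x.
Proof. nia. Qed.

Section Main.
Variables (Tend : nat) (V : finType) (E : rel V) (M : nat) (s g : 'I_M -> V).
Hypothesis HM : 0 < M.
Local Notation agent := 'I_M.
Local Notation step := (dbs_step Tend E s g).

Definition ninv (N : node M) :=
  [/\ disj N.1, N.2 + #|cover N.1| = M & N.1 != set0].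

Definition succset (q : plan V M) : {set agent} := [set i | isSome (q i)].

Definition Inv (st : dbs_state V M) : Prop :=
  match st with
  | Open OPEN => (forall N, N \in OPEN -> ninv N) /\
      (forall q, is_solution Tend E s g q -> exists2 N, N \in OPEN & succset q \subset cover N.1)
  | Done p => optimal_solution Tend E s g p
  end.

Lemma sub_consistent q (gam : {set agent}) : is_solution Tend E s g q -> gam \subset succset q ->
  consistent Tend E s g gam.
Proof.
move=> [Hp Hc] Hsub.
exists (fun i => if i \in gam then q i else None); split; [split|].
- by move=> i l; case: ifP => // _; apply: Hp.
- move=> i j l1 l2 Hij; case: ifP => // _ H1; case: ifP => // _ H2.
  exact: Hc Hij H1 H2.
- move=> i; case: ifP => Hi //.
  by have := subsetP Hsub i Hi; rewrite inE.
Qed.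

Lemma cost_card (p : plan V M) (A : {set agent}) :
  (forall i, isSome (p i) = (i \in A)) -> cost p + #|A| = M.
Proof.
move=> HA; rewrite /cost.
have -> : #|[pred i : agent | ~~ isSome (p i)]| = #|[predC A]|.
  by apply: eq_card => i; rewrite !inE HA.
by rewrite addnC cardC card_ord.
Qed.

Lemma inv_step st st' : Inv st -> step st st' -> Inv st'.
Proof.
move=> HI Hst; destruct Hst as [OPEN rest N gam p Hperm Hmin Hac H1 Hsol Hsucc
  |OPEN rest N g1 g2 Hperm Hmin Hac Hg1 Hg2 Hne Hs1 Hs2
  |OPEN rest N gam Hperm Hmin Hg Hnc]; case: HI => HN Hgood.
- have HNin : N \in OPEN by rewrite (perm_mem Hperm) mem_head.
  have [_ HNc _] := HN _ HNin.
  rewrite H1 cover1 in HNc.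
  split => // q Hq.
  have [N' HN' Hsub] := Hgood q Hq.
  have [_ HNc' _] := HN _ HN'.
  have := Hmin _ HN'.
  have := subset_leq_card Hsub.
  have := cost_card Hsucc.
  have := @cost_card q (succset q) (fun i => ltac:(by rewrite inE)).
  move=> A B C D; exact: (arith1 A B C D HNc HNc').
- have HNin : N \in OPEN by rewrite (perm_mem Hperm) mem_head.
  have [HD HNc HN0] := HN _ HNin.
  have Hcov := cover_merge Hg1 Hg2.
  have Hmem : forall N', N' \in rest -> N' \in OPEN.
    by move=> N' HN'; rewrite (perm_mem Hperm) inE HN' orbT.
  split.
  + move=> N'; rewrite inE => /orP[/eqP ->|HN']; last exact: HN (Hmem _ HN').
    split => //=; first exact: disj_merge.
    * by rewrite Hcov.
    * by apply/set0Pn; exists (g1 :|: g2); rewrite !inE eqxx orbT.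
  + move=> q Hq; have [N' HN' Hsub] := Hgood q Hq.
    move: HN'; rewrite (perm_mem Hperm) inE => /orP[/eqP HNN|HN'].
    * subst N'; exists (((N.1 :\ g1) :\ g2) :|: [set g1 :|: g2], N.2); first exact: mem_head.
      by rewrite /= Hcov.
    * by exists N' => //; rewrite inE HN' orbT.
- have HNin : N \in OPEN by rewrite (perm_mem Hperm) mem_head.
  have [HD HNc HN0] := HN _ HNin.
  have Hmem : forall N', N' \in rest -> N' \in OPEN.
    by move=> N' HN'; rewrite (perm_mem Hperm) inE HN' orbT.
  split.
  + move=> N'; rewrite mem_cat => /orP[/mapP [a Ha ->]|HN']; last exact: HN (Hmem _ HN').
    rewrite mem_enum in Ha.
    split => //=; first exact: disj_split.
    * rewrite cover_split //.
      have Hac : a \in cover N.1 by apply/coverE; exists gam.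
      move: HNc; rewrite (cardsD1 a (cover N.1)) Hac /=; lia.
    * by apply/set0Pn; exists (gam :\ a); rewrite !inE eqxx orbT.
  + move=> q Hq; have [N' HN' Hsub] := Hgood q Hq.
    move: HN'; rewrite (perm_mem Hperm) inE => /orP[/eqP HNN|HN'].
    * subst N'.
      have : ~~ (gam \subset succset q).
        by apply/negP => Hs; apply: Hnc; exact: sub_consistent Hq Hs.
      move/subsetPn => [a Ha HaS].
      exists (((N.1 :\ gam) :|: [set gam :\ a]), N.2.+1).
        by rewrite mem_cat; apply/orP; left; apply: map_f; rewrite mem_enum.
      rewrite /= cover_split //; apply/subsetP => x Hx; rewrite in_setD1.
      rewrite (subsetP Hsub _ Hx) andbT; apply/negP => /eqP Hxa.
      by subst x; rewrite Hx in HaS.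
    * by exists N' => //; rewrite mem_cat HN' orbT.
Qed.


Definition fN (N : node M) := #|cover N.1| + #|N.1|.
Definition wN (N : node M) := M.+1 ^ fN N.
Definition meas (st : dbs_state V M) :=
  match st with Open l => (\sum_(N <- l) wN N).+1 | Done _ => 0 end.

Lemma card_addset (A : {set {set agent}}) x : #|A :|: [set x]| <= #|A|.+1.
Proof. by rewrite setUC cardsU1; case: (x \notin A). Qed.

Lemma meas_step st st' : Inv st -> step st st' -> meas st' < meas st.
Proof.
move=> HI Hst; destruct Hst as [OPEN rest N gam p Hperm Hmin Hac H1 Hsol Hsucc
  |OPEN rest N g1 g2 Hperm Hmin Hac Hg1 Hg2 Hne Hs1 Hs2
  |OPEN rest N gam Hperm Hmin Hg Hnc]; case: HI => HN Hgood => //=.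
- rewrite (perm_big _ Hperm) !big_cons ltnS ltn_add2r /wN ltn_exp2l ?ltnS //.
  rewrite /fN /= cover_merge // ltn_add2l.
  have H2' : g2 \in N.1 :\ g1 by rewrite in_setD1 eq_sym Hne.
  have := card_addset (N.1 :\ g1 :\ g2) (g1 :|: g2).
  rewrite (cardsD1 g1 N.1) Hg1 (cardsD1 g2 (N.1 :\ g1)) H2' /=.
  move=> H; exact: leq_ltn_trans H _.
- have HNin : N \in OPEN by rewrite (perm_mem Hperm) mem_head.
  have [HD HNc HN0] := HN _ HNin.
  rewrite (perm_big _ Hperm) big_cons big_cat big_map ltnS ltn_add2r.
  have Hf : forall a, a \in enum gam -> fN ((N.1 :\ gam :|: [set gam :\ a], N.2.+1)) <= (fN N).-1.
    move=> a; rewrite mem_enum => Ha; rewrite /fN /= cover_split //.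
    have Hac : a \in cover N.1 by apply/coverE; exists gam.
    have := card_addset (N.1 :\ gam) (gam :\ a).
    rewrite (cardsD1 a (cover N.1)) Hac (cardsD1 gam N.1) Hg /=.
    move=> H; by rewrite add0n leq_add2l add1n.
  have Hpos : 0 < fN N.
    by rewrite /fN (cardsD1 gam N.1) Hg addnS.
  apply: (leq_ltn_trans (sum_le_const (c := M.+1 ^ (fN N).-1) _)).
    by move=> a Ha; rewrite /wN leq_pexp2l // Hf.
  rewrite /wN -(prednK Hpos) expnS -cardE.
  have : #|gam| <= M by rewrite -[X in _ <= X]card_ord max_card.
  have : 0 < M.+1 ^ (fN N).-1 by rewrite expn_gt0.
  move: (M.+1 ^ _) => x H1 H2; exact: arith2 H1 H2.
Qed.


Lemma Inv_init : Inv (dbs_init V M).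
Proof.
have Hcov : cover [set [set i] | i : agent] = [set: agent].
  apply/setP => x; rewrite inE; apply/coverE; exists [set x]; last by rewrite set11.
  by apply: imset_f.
split.
- move=> N; rewrite inE => /eqP ->; split => /=.
  + move=> A B x /imsetP [i _ ->] /imsetP [j _ ->] Hne; rewrite !inE => /eqP Hi /eqP Hj.
    by subst; rewrite eqxx in Hne.
  + by rewrite Hcov cardsT card_ord.
  + by apply/set0Pn; exists [set Ordinal HM]; apply: imset_f.
- move=> q _; exists ([set [set i] | i : agent], 0); first exact: mem_head.
  by rewrite /= Hcov subsetT.
Qed.

Lemma enum_ne (T : finType) (A : {set T}) : 0 < #|A| -> enum A != [::].
Proof. by rewrite cardE; case: (enum A). Qed.

Lemma progress OPEN : Inv (Open V OPEN) -> exists st', step (Open V OPEN) st'.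
Proof.
case=> HN Hgood.
have Hq0 : is_solution Tend E s g (fun _ => None).
  by split => [i l|i j l1 l2 _].
have [N0 HN0 _] := Hgood _ Hq0.
have Hne : OPEN != [::] by case: OPEN HN0 {HN Hgood}.
have [N HNin Hmin] := seq_min snd Hne.
have Hperm := perm_to_rem HNin.
have [HD HNc HN1] := HN _ HNin.
case: (classic (exists gam, gam \in N.1 /\ ~ consistent Tend E s g gam)).
  move=> [gam [Hg Hnc]]; eexists; exact: dbs_split Hperm Hmin Hg Hnc.
move=> Hno.
have Hac : all_consistent Tend E s g N.1.
  move=> gam Hg; apply: NNPP => Hc; apply: Hno; by exists gam.
case: (boolP (#|N.1| == 1)) => [/cards1P [gam Hgam] | H1].
  have [p [Hp Hs]] := Hac gam ltac:(by rewrite Hgam set11).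
  eexists; exact: dbs_return Hperm Hmin Hac Hgam Hp Hs.
have Hc0 : 0 < #|N.1| by rewrite card_gt0.
have [g1 Hg1 Hm1] := seq_min (fun B : {set agent} => #|B|) (enum_ne Hc0).
rewrite mem_enum in Hg1.
have Hc1 : 0 < #|N.1 :\ g1|.
  by move: H1; rewrite (cardsD1 g1 N.1) Hg1 add1n eqSS lt0n.
have [g2 Hg2 Hm2] := seq_min (fun B : {set agent} => #|B|) (enum_ne Hc1).
rewrite mem_enum in_setD1 in Hg2; case/andP: Hg2 => Hne21 Hg2.
eexists; apply: (dbs_merge Hperm Hmin Hac Hg1 Hg2).
- by rewrite eq_sym.
- by move=> gam Hg; apply: Hm1; rewrite mem_enum.
- by move=> gam Hg Hgne; apply: Hm2; rewrite mem_enum in_setD1 Hgne.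
Qed.

Lemma acc_aux n st : meas st < n -> Inv st -> Acc (fun y x => step x y) st.
Proof.
elim: n st => [//|n IH] st Hlt HI; constructor => y Hy.
apply: IH; last exact: inv_step HI Hy.
rewrite ltnS in Hlt; exact: leq_trans (meas_step HI Hy) Hlt.
Qed.

Lemma reach_inv x y : clos_refl_trans _ step x y -> Inv x -> Inv y.
Proof.
elim=> {x y} [x y Hxy|x|x y z _ IH1 _ IH2] HI //; [exact: inv_step HI Hxy|auto].
Qed.

End Main.

Theorem theorem3 (Tend : nat) (V : finType) (E : rel V) (M : nat)
    (s g : 'I_M -> V)
    (HE : symmetric E) (HM : 0 < M)
    (Hdist : forall i, dist_le E (s i) (g i) Tend) :
  (* termination: every run of DBS from the root is finite *)
  Acc (fun y x => dbs_step Tend E s g x y) (dbs_init V M) /\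
  (* every reachable state either can still move, or is a returned
     optimal solution *)
  (forall st, clos_refl_trans _ (dbs_step Tend E s g) (dbs_init V M) st ->
     (exists st', dbs_step Tend E s g st st') \/
     (exists p, st = Done p /\ optimal_solution Tend E s g p)).
Proof.
split.
  exact: (@acc_aux Tend V E M s g HM (meas (dbs_init V M)).+1 _ (ltnSn _) (Inv_init Tend E s g HM)).
move=> st Hr; have HI := reach_inv HM Hr (Inv_init Tend E s g HM).
case: st Hr HI => [OPEN|p] _ HI.
- by left; apply: progress.
- by right; exists p.
Qed.
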